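(* Let $W=x_1^{a_1}+\dots+x_N^{a_N}$ with all $a_i>2$. The genus-zero potentials $\mathcal F^{\rm FJRW}_{0,W}$ and $\mathcal F^{\rm SG}_{0,W^T,\zeta}$ are each completely determined (via the pairing, the ring structure, the dimension and integer-degree vanishing conditions, and the WDVV equations) by the Frobenius algebra structure and the correlators $\langle x_j,x_j,x_j^{a_j-2},\prod_{i=1}^Nx_i^{a_i-2}\rangle$, $j=1,\dots,N$ (on the A-side, with insertions replaced by their images under Krawitz's map $\Psi$).
   Context: Here $W^T=W$. $\mathcal F^{\rm FJRW}_{0,W}$ is the genus-zero primary FJRW prepotential of $(W,G_W)$, $G_W$ the maximal diagonal symmetry group; $\mathcal F^{\rm SG}_{0,W^T,\zeta}$ is the Saito–Givental prepotential (in flat coordinates) of the primitive form $\zeta$ associated with the standard good basis $\{\prod x_i^{r_i}d^Nx: 0\le r_i\le a_i-2\}$. $\Psi:\mathrm{Jac}(W)\to\mathcal H_W$ is Krawitz's Frobenius algebra isomorphism, $\Psi(x_i)$ = generator of the narrow sector $\rho_iJ_W$, where $\rho_i=(1,\dots,e^{2\pi\sqrt{-1}/a_i},\dots,1)$ and $J_W=(e^{2\pi\sqrt{-1}/a_1},\dots,e^{2\pi\sqrt{-1}/a_N})$. The WDVV equations give, for any insertions, $\langle\xi_1,\dots,\xi_{k-3},\gamma,\delta,\epsilon\star\phi\rangle=\langle\xi,\gamma,\epsilon,\delta\star\phi\rangle+\langle\xi,\gamma\star\epsilon,\delta,\phi\rangle-\langle\xi,\gamma\star\delta,\epsilon,\phi\rangle+S$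 with $S$ a combination of correlators with fewer than $k$ insertions ($S=0$ if $k=4$). *)

(* Defs.v *)
(* Abstract genus-zero correlator systems on the Frobenius
   algebra Jac(W) of the Fermat polynomial W = x_1^{a_1} + ... + x_N^{a_N},
   written in the monomial basis {x^r : 0 <= r_i <= a_i - 2}. *)
From HB Require Import structures.
From mathcomp Require Import all_boot all_order all_algebra.
Set Implicit Arguments.
Unset Strict Implicit.
Unset Printing Implicit Defensive.
Import Order.TTheory GRing.Theory Num.Theory.
Local Open Scope ring_scope.

Definition bnd (N : nat) (a : 'I_N -> nat) : nat := (\max_(i < N) a i)%N.

(* exponent vectors r, standing for the monomial x^r = prod_i x_i^{r_i} *)
Definition Mon (N : nat) (a : 'I_N -> nat) := {ffun 'I_N -> 'I_(bnd a)}.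

(* x^r is a standard basis element of Jac(W): 0 <= r_i <= a_i - 2 *)
Definition valid N (a : 'I_N -> nat) (r : Mon a) : bool :=
  [forall i, (nat_of_ord (r i) <= a i - 2)%N].

(* x^r is the top monomial prod_i x_i^{a_i-2} (generator of the socle) *)
Definition is_top N (a : 'I_N -> nat) (r : Mon a) : bool :=
  [forall i, nat_of_ord (r i) == (a i - 2)%N].

Definition is_xj N (a : 'I_N -> nat) (j : 'I_N) (r : Mon a) : bool :=
  [forall i, nat_of_ord (r i) == (i == j) :> nat].

Definition is_xj_top N (a : 'I_N -> nat) (j : 'I_N) (r : Mon a) : bool :=
  [forall i, nat_of_ord (r i) == (if i == j then a j - 2 else 0)%N].

(* x^e and x^f are dual: x^e x^f = top monomial *)
Definition compl N (a : 'I_N -> nat) (e f : Mon a) : bool :=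
  [forall i, (nat_of_ord (e i) + nat_of_ord (f i) == a i - 2)%N].

Definition wdeg N (a : 'I_N -> nat) (r : Mon a) : rat :=
  \sum_(i < N) (nat_of_ord (r i))%:R / (a i)%:R.

Definition chat N (a : 'I_N -> nat) : rat :=
  \sum_(i < N) (1 - 2%:R / (a i)%:R).

(* A correlator system: corr s = < x^{s_1}, ..., x^{s_k} >_{0,k}  (k >= 3). *)
Section CorrConditions.
Variables (K : numFieldType) (N : nat) (a : 'I_N -> nat).
Variable (c : K).  (* pairing normalisation: eta(1, top) = c *)
Variable (corr : seq (Mon a) -> K).

Definition all_valid (s : seq (Mon a)) := all (@valid N a) s.

Definition ax_sym := forall s t, all_valid s -> perm_eq s t -> corr s = corr t.

(* three-point correlators = Frobenius algebra structure:
   <x^r,x^s,x^t> = eta(x^r x^s, x^t), which is c iff r+s+t = top, else 0 *)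
Definition ax_three := forall r s t, valid r -> valid s -> valid t ->
  corr [:: r; s; t] =
    if [forall i, (nat_of_ord (r i) + nat_of_ord (s i) + nat_of_ord (t i)
                    == a i - 2)%N] then c else 0.

Definition ax_dim := forall s, all_valid s -> (3 <= size s)%N -> corr s != 0 ->
  \sum_(r <- s) wdeg r = chat a + (size s)%:R - 3%:R.

Definition ax_int := forall s, all_valid s -> (3 <= size s)%N -> corr s != 0 ->
  forall i, (\sum_(r <- s) (nat_of_ord (r i)).+1 = size s - 2 %[mod a i])%N.

(* WDVV equations (full form): for insertions xs, g, d, e, f,
   sum_{I u J = xs} sum_{basis} <xs_I, g, d, e_a> eta^{ab} <e_b, xs_J, e, f>
   = same with d and e exchanged; eta^{ab} = c^-1 [a,b dual]. *)
Definition wdvv_side (xs : seq (Mon a)) (g d e f : Mon a) : K :=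
  \sum_(m : (size xs).-tuple bool)
   \sum_(u : Mon a | valid u) \sum_(v : Mon a | valid v)
     (if compl u v then c^-1 else 0) *
     corr (mask m xs ++ [:: g; d; u]) * corr (v :: mask (map negb m) xs ++ [:: e; f]).

Definition ax_wdvv := forall xs g d e f, all_valid xs ->
  valid g -> valid d -> valid e -> valid f ->
  wdvv_side xs g d e f = wdvv_side xs g e d f.

Definition genus0_theory := [/\ ax_sym, ax_three, ax_dim, ax_int & ax_wdvv].
End CorrConditions.

(* Main.v *)
Require Import Defs.
From HB Require Import structures.
From mathcomp Require Import all_boot all_order all_algebra.
From mathcomp Require Import zify ring.
Import Order.TTheory GRing.Theory Num.Theory.
Set Implicit Arguments.
Unset Strict Implicit.

Local Open Scope ring_scope.

Section Helpers.
Variable (N : nat) (a : 'I_N -> nat).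
Hypothesis ha : forall i, (2 < a i)%N.

Lemma a_bnd i : (a i <= bnd a)%N. Proof. exact: leq_bigmax. Qed.

Definition mk (t : Mon a) (h : 'I_N -> nat) : Mon a := [ffun i => insubd (t i) (h i)].

Lemma mkE t h i : (h i <= a i - 2)%N -> nat_of_ord (mk t h i) = h i.
Proof.
move=> H; rewrite ffunE val_insubd.
have -> : (h i < bnd a)%N by have := a_bnd i; have := ha i; lia.
by [].
Qed.

Lemma validP {r : Mon a} : valid r -> forall i, (nat_of_ord (r i) <= a i - 2)%N.
Proof. by move/forallP. Qed.

Lemma validI (r : Mon a) : (forall i, (nat_of_ord (r i) <= a i - 2)%N) -> valid r.
Proof. by move=> H; apply/forallP. Qed.

Lemma eq_mon (r t : Mon a) : (forall i, nat_of_ord (r i) = nat_of_ord (t i)) -> r = t.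
Proof. by move=> H; apply/ffunP => i; apply: val_inj; exact: H. Qed.

Definition sz (r : Mon a) : nat := (\sum_i nat_of_ord (r i))%N.
Definition vs (e f : Mon a) : bool := [forall i, (nat_of_ord (e i) + nat_of_ord (f i) <= a i - 2)%N].
Definition addm (e f : Mon a) : Mon a := mk e (fun i => (nat_of_ord (e i) + nat_of_ord (f i))%N).
Definition gen (t : Mon a) (l : 'I_N) : Mon a := mk t (fun i => nat_of_bool (i == l)).
Definition subm (t : Mon a) (l : 'I_N) : Mon a := mk t (fun i => (nat_of_ord (t i) - (i == l))%N).
Definition cmpl (u : Mon a) : Mon a := mk u (fun i => (a i - 2 - nat_of_ord (u i))%N).

Lemma addmE e f i : vs e f -> nat_of_ord (addm e f i) = (e i + f i)%N.
Proof. by move/forallP=> H; rewrite mkE. Qed.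

Lemma addm_valid e f : vs e f -> valid (addm e f).
Proof. by move=> H; apply: validI => i; rewrite addmE //; move/forallP: H. Qed.

Lemma genE t l i : nat_of_ord (gen t l i) = (i == l).
Proof. by rewrite mkE //; have := ha i; case: (i == l) => /=; lia. Qed.

Lemma gen_valid t l : valid (gen t l).
Proof. by apply: validI => i; rewrite genE; have := ha i; case: (i == l) => /=; lia. Qed.

Lemma submE t l i : valid t -> nat_of_ord (subm t l i) = (t i - (i == l))%N.
Proof. by move=> /validP H; rewrite mkE //; have := H i; lia. Qed.

Lemma subm_valid t l : valid t -> valid (subm t l).
Proof. by move=> H; apply: validI => i; rewrite submE //; have := validP H i; lia. Qed.

Lemma cmplE u i : nat_of_ord (cmpl u i) = (a i - 2 - u i)%N.
Proof. by rewrite mkE //; lia. Qed.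

Lemma cmpl_valid u : valid (cmpl u).
Proof. by apply: validI => i; rewrite cmplE; lia. Qed.

Lemma sz_addm e f : vs e f -> sz (addm e f) = (sz e + sz f)%N.
Proof. by move=> H; rewrite /sz -big_split; apply: eq_bigr => i _; rewrite addmE. Qed.

Lemma sz_gen t l : sz (gen t l) = 1%N.
Proof.
rewrite /sz (bigD1 l) //= genE eqxx big1 // => i /negPf Hi; by rewrite genE Hi.
Qed.

Lemma sz_ge (r : Mon a) j : (r j <= sz r)%N.
Proof. by rewrite /sz (bigD1 j) //=; lia. Qed.

Lemma gen_subm t l : valid t -> (0 < t l)%N -> vs (gen t l) (subm t l) /\ addm (gen t l) (subm t l) = t.
Proof.
move=> Vt Hl.
have Hvs : vs (gen t l) (subm t l).
  apply/forallP => i; rewrite genE submE //; have := validP Vt i.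
  by case: eqP => [->|_] /=; lia.
split=> //; apply: eq_mon => i; rewrite addmE // genE submE //.
by case: eqP => [->|_] /=; lia.
Qed.

Lemma sz_subm t l : valid t -> (0 < t l)%N -> sz (subm t l) = (sz t - 1)%N.
Proof.
move=> Vt Hl; have [Hv He] := gen_subm Vt Hl.
have := sz_addm Hv; rewrite He sz_gen; lia.
Qed.

End Helpers.

Local Open Scope ring_scope.

Section Sel.
Variable (K : numFieldType) (N : nat) (a : 'I_N -> nat).
Hypothesis ha : forall i, (2 < a i)%N.
Variable (c : K) (corr : seq (Mon a) -> K).

Definition Ssum i (s : seq (Mon a)) := (\sum_(r <- s) nat_of_ord (r i))%N.

Lemma sel_div (Hi : ax_int corr) s : all_valid s -> (3 <= size s)%N -> corr s != 0 ->
  forall i, ((Ssum i s + 2) %% a i = 0)%N.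
Proof.
move=> V Hs Hc i; have := Hi s V Hs Hc i.
have -> : (\sum_(r <- s) (nat_of_ord (r i)).+1 = Ssum i s + size s)%N.
  by rewrite /Ssum -sum1_size -big_split; apply: eq_bigr => r _ /=; lia.
have -> : (Ssum i s + size s = (Ssum i s + 2) + (size s - 2))%N by lia.
move=> H; have : ((Ssum i s + 2) + (size s - 2) == 0 + (size s - 2) %[mod a i])%N.
  by rewrite add0n H.
by rewrite eqn_modDr mod0n => /eqP.
Qed.

Lemma sel_sum (Hd : ax_dim corr) (Hi : ax_int corr) s : all_valid s -> (3 <= size s)%N -> corr s != 0 ->
  (\sum_i (Ssum i s + 2) %/ a i = N + size s - 3)%N.
Proof.
move=> V Hs Hc; have Hm := sel_div Hi V Hs Hc.
have := Hd s V Hs Hc; rewrite /wdeg exchange_big /= /chat.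
have E : forall i, ((Ssum i s)%:R / (a i)%:R : rat) = ((Ssum i s + 2) %/ a i)%:R - 2%:R / (a i)%:R.
  move=> i; have ai0 : (a i)%:R != 0 :> rat by rewrite pnatr_eq0; have := ha i; lia.
  have := divn_eq (Ssum i s + 2) (a i); rewrite Hm addn0 => Ed.
  apply: (mulIf ai0); rewrite mulrBl !mulfVK // -natrM -Ed natrD; ring.
under eq_bigr => i _ do rewrite -mulr_suml -natr_sum -/(Ssum i s) E.
rewrite !sumrB sumr_const card_ord => H.
apply/eqP; rewrite -(eqr_nat rat) natr_sum.
have -> : (N + size s - 3)%:R = (N%:R + (size s)%:R - 3%:R : rat).
  by rewrite natrB ?natrD //; lia.
apply/eqP; move: H; set A := \sum_(i < N) _; set B := \sum_(i < N) _.
move=> H; rewrite -[A](subrK B) H.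
suff -> : (1 *+ N : rat) = N%:R by ring.
by [].
Qed.

End Sel.

Local Open Scope ring_scope.

Section Inner.
Variable (K : numFieldType) (N : nat) (a : 'I_N -> nat).
Hypothesis ha : forall i, (2 < a i)%N.
Variable (c : K) (corr : seq (Mon a) -> K).
Hypothesis c0 : c != 0.
Hypothesis H3 : ax_three c corr.

Lemma compl_cmpl (u v : Mon a) : valid u -> valid v -> compl u v = (v == cmpl u).
Proof.
move=> Vu Vv; apply/idP/eqP.
  move/forallP=> H; apply: eq_mon => i; rewrite (cmplE ha); have := eqP (H i); lia.
move=> ->; apply/forallP => i; rewrite (cmplE ha); have := validP Vu i; lia.
Qed.

Lemma inner (X : Mon a -> K) (e f : Mon a) : valid e -> valid f ->
  \sum_(u : Mon a | valid u) \sum_(v : Mon a | valid v)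
     (if compl u v then c^-1 else 0) * X u * corr [:: v; e; f]
  = if vs e f then X (addm e f) else 0.
Proof.
move=> Ve Vf.
under eq_bigr => u Vu.
  rewrite (bigD1 (cmpl u)) ?(cmpl_valid ha) //= compl_cmpl ?(cmpl_valid ha) // eqxx.
  rewrite big1 ?addr0; last first.
    by move=> v /andP [Vv Hv]; rewrite compl_cmpl // (negPf Hv) !mul0r.
  rewrite H3 ?(cmpl_valid ha) //.
  over.
have Ec : forall u : Mon a, valid u ->
   [forall i, (nat_of_ord (cmpl u i) + nat_of_ord (e i) + nat_of_ord (f i) == a i - 2)%N]
   = (vs e f && (u == addm e f)).
  move=> u Vu; apply/forallP/idP.
    move=> H; have Hv : vs e f.
      apply/forallP => i; have := eqP (H i); rewrite (cmplE ha); have := validP Vu i; lia.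
    rewrite Hv /=; apply/eqP; apply: eq_mon => i; rewrite (addmE ha) //.
    have := eqP (H i); rewrite (cmplE ha); have := validP Vu i; lia.
  move=> /andP [Hv /eqP ->] i; rewrite (cmplE ha) (addmE ha) //; have := forallP Hv i; lia.
under eq_bigr => u Vu do rewrite Ec //.
case Hv: (vs e f) => /=.
  rewrite (bigD1 (addm e f)) ?(addm_valid ha) //= eqxx big1 ?addr0.
    by rewrite mulrAC mulVf // mul1r.
  by move=> u /andP [_ /negPf ->]; rewrite mulr0.
by rewrite big1 // => u _; rewrite mulr0.
Qed.

End Inner.

Local Open Scope ring_scope.

Lemma count_lt_true n (m : n.-tuple bool) b :
  m != nseq_tuple n b -> (count (pred1 b) m < n)%N.
Proof.
move=> Hm; rewrite ltn_neqAle; apply/andP; split; last first.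
  by rewrite -{2}(size_tuple m) count_size.
apply: contra Hm => /eqP Hc; apply/eqP; apply: val_inj => /=.
have : all (pred1 b) m by rewrite all_count Hc size_tuple.
by move/all_pred1P; rewrite size_tuple.
Qed.

Section Inner2.
Variable (K : numFieldType) (N : nat) (a : 'I_N -> nat).
Hypothesis ha : forall i, (2 < a i)%N.
Variable (c : K) (corr : seq (Mon a) -> K).
Hypothesis c0 : c != 0.
Hypothesis H3 : ax_three c corr.
Hypothesis Hsym : ax_sym corr.

Lemma complC (u v : Mon a) : compl u v = compl v u.
Proof. by apply/forallP/forallP => H i; rewrite addnC; exact: H. Qed.

Lemma inner2 (Y : Mon a -> K) (g d : Mon a) : valid g -> valid d ->
  \sum_(u : Mon a | valid u) \sum_(v : Mon a | valid v)
     (if compl u v then c^-1 else 0) * corr [:: g; d; u] * Y v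
  = if vs g d then Y (addm g d) else 0.
Proof.
move=> Vg Vd; rewrite exchange_big /= -(inner ha c0 H3) //.
apply: eq_bigr => v Vv; apply: eq_bigr => u Vu.
rewrite complC (Hsym (t := [:: u; g; d])) /=; first by rewrite mulrAC.
  by rewrite /all_valid /= Vg Vd Vu.
by rewrite (perm_catCA [:: g; d] [:: u] [::]).
Qed.

Definition term (xs : seq (Mon a)) (g d e f : Mon a) (m : (size xs).-tuple bool) :=
   \sum_(u : Mon a | valid u) \sum_(v : Mon a | valid v)
     (if compl u v then c^-1 else 0) *
     corr (mask m xs ++ [:: g; d; u]) * corr (v :: mask (map negb m) xs ++ [:: e; f]).

Lemma wdvv_split xs g d e f : (0 < size xs)%N -> all_valid xs ->
  valid g -> valid d -> valid e -> valid f ->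
  wdvv_side c corr xs g d e f =
   (if vs e f then corr (xs ++ [:: g; d; addm e f]) else 0) +
   (if vs g d then corr (addm g d :: xs ++ [:: e; f]) else 0) +
   \sum_(m : (size xs).-tuple bool | (m != nseq_tuple _ true) && (m != nseq_tuple _ false))
      @term xs g d e f m.
Proof.
move=> Hn Vxs Vg Vd Ve Vf; rewrite /wdvv_side (bigD1 (nseq_tuple _ true)) //=.
have Htf : nseq_tuple (size xs) true != nseq_tuple (size xs) false.
  apply/eqP => /(congr1 val) /=; case: (size xs) Hn => // n _ /= [] //.
rewrite (bigD1 (nseq_tuple _ false)) /=; last by rewrite eq_sym.
rewrite addrA; congr (_ + _ + _).
- rewrite mask_true // map_nseq /= mask_false /=.
  exact: (inner ha c0 H3 (fun u => corr (xs ++ [:: g; d; u]))).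
- rewrite mask_false map_nseq /= mask_true //=.
  exact: (inner2 (fun v => corr (v :: xs ++ [:: e; f]))).
Qed.

End Inner2.

Local Open Scope ring_scope.

Section Rel.
Variable (K : numFieldType) (N : nat) (a : 'I_N -> nat).
Hypothesis ha : forall i, (2 < a i)%N.
Variable (c : K) (corr1 corr2 : seq (Mon a) -> K).
Hypothesis c0 : c != 0.
Hypothesis T1 : genus0_theory c corr1.
Hypothesis T2 : genus0_theory c corr2.

Lemma mid_eq xs g d e f :
  (forall s, all_valid s -> (3 <= size s)%N -> (size s < size xs + 3)%N -> corr1 s = corr2 s) ->
  all_valid xs -> valid g -> valid d -> valid e -> valid f ->
  \sum_(m : (size xs).-tuple bool | (m != nseq_tuple _ true) && (m != nseq_tuple _ false))
      term c corr1 g d e f m =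
  \sum_(m : (size xs).-tuple bool | (m != nseq_tuple _ true) && (m != nseq_tuple _ false))
      term c corr2 g d e f m.
Proof.
move=> IH Vxs Vg Vd Ve Vf.
apply: eq_bigr => m /andP [Ht Hf]; apply: eq_bigr => u Vu; apply: eq_bigr => v Vv.
have Sm : size m = size xs by rewrite size_tuple.
have Smn : size (map negb m) = size xs by rewrite size_map size_tuple.
have C1 := count_lt_true Ht; have C2 := count_lt_true Hf.
have E1 : count id m = count (pred1 true) m by apply: eq_count => b; case: b.
have E2 : count id (map negb m) = count (pred1 false) m.
  by rewrite count_map; apply: eq_count => b; case: b.
congr (_ * _ * _); apply: IH.
- by rewrite /all_valid all_cat all_mask //= Vg Vd Vu.
- by rewrite size_cat /=; lia.
- by rewrite size_cat (size_mask Sm) E1 /= ltn_add2r.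
- by rewrite /all_valid /= all_cat all_mask //= Vv Ve Vf.
- by rewrite /= size_cat /=; lia.
- by rewrite /= size_cat (size_mask Smn) E2 /= addn2 addn3 ltnS ltnS.
Qed.

Lemma ifB (b : bool) (x y : K) : (if b then x - y else 0) = (if b then x else 0) - (if b then y else 0).
Proof. by case: b; rewrite ?subr0. Qed.

Lemma relW xs g d e f :
  (forall s, all_valid s -> (3 <= size s)%N -> (size s < size xs + 3)%N -> corr1 s = corr2 s) ->
  (0 < size xs)%N -> all_valid xs -> valid g -> valid d -> valid e -> valid f ->
  (if vs e f then corr1 (xs ++ [:: g; d; addm e f]) - corr2 (xs ++ [:: g; d; addm e f]) else 0) +
  (if vs g d then corr1 (addm g d :: xs ++ [:: e; f]) - corr2 (addm g d :: xs ++ [:: e; f]) else 0) =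
  (if vs d f then corr1 (xs ++ [:: g; e; addm d f]) - corr2 (xs ++ [:: g; e; addm d f]) else 0) +
  (if vs g e then corr1 (addm g e :: xs ++ [:: d; f]) - corr2 (addm g e :: xs ++ [:: d; f]) else 0).
Proof.
move=> IH Hn Vxs Vg Vd Ve Vf.
case: T1 => S1 H31 _ _ W1; case: T2 => S2 H32 _ _ W2.
have := W1 xs g d e f Vxs Vg Vd Ve Vf; have := W2 xs g d e f Vxs Vg Vd Ve Vf.
rewrite !(wdvv_split ha c0 H31 S1 Hn) // !(wdvv_split ha c0 H32 S2 Hn) //.
rewrite (mid_eq (g:=g) (d:=d) (e:=e) (f:=f) IH) // (mid_eq (g:=g) (d:=e) (e:=d) (f:=f) IH) //.
rewrite !ifB.
set M := \sum_(m | _) term c corr2 g d e f m.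
set M' := \sum_(m | _) term c corr2 g e d f m.
move=> E2 E1.
apply/eqP; rewrite -subr_eq0; apply/eqP.
move: E1 E2; set A1 := (if vs e f then _ else _); set A2 := (if vs e f then _ else _).
set B1 := (if vs g d then _ else _); set B2 := (if vs g d then _ else _).
set C1 := (if vs d f then _ else _); set C2 := (if vs d f then _ else _).
set D1 := (if vs g e then _ else _); set D2 := (if vs g e then _ else _).
move=> E1 E2.
have -> : A1 - A2 + (B1 - B2) - (C1 - C2 + (D1 - D2)) =
  (A1 + B1 + M - (C1 + D1 + M')) - (A2 + B2 + M - (C2 + D2 + M')) by ring.
by rewrite E1 E2 !subrr.
Qed.

End Rel.

Local Close Scope ring_scope.

Section Term.
Variable (N : nat) (a : 'I_N -> nat).
Hypothesis ha : forall i, (2 < a i)%N.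

Lemma terminal (P R : Mon a) (rest : seq (Mon a)) :
  valid P -> valid R -> all_valid rest -> (forall r, r \in rest -> sz r <= 1) ->
  2 <= size rest ->
  (forall i, (Ssum i (P :: R :: rest) + 2) %% a i = 0) ->
  \sum_i (Ssum i (P :: R :: rest) + 2) %/ a i = N + size (P :: R :: rest) - 3 ->
  exists j u1 u2, rest = [:: u1; u2] /\ [/\ is_xj j u1, is_xj j u2,
     nat_of_ord (P j) = a j - 2, nat_of_ord (R j) = a j - 2 &
     forall i, i != j -> P i + R i = a i - 2].
Proof.
move=> VP VR Vrest Hsz Hsize Hmod Hsum.
set m := fun i => (Ssum i (P :: R :: rest) + 2) %/ a i.
set n := fun i => Ssum i rest.
have Em : forall i, m i * a i = P i + R i + n i + 2.
  move=> i; rewrite /m; have := divn_eq (Ssum i (P :: R :: rest) + 2) (a i).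
  rewrite Hmod addn0 => H; rewrite -H /n /Ssum !big_cons; lia.
have HP := validP VP; have HR := validP VR.
have Hm1 : forall i, (1 <= m i) && (m i <= n i + 1).
  move=> i; have := Em i; have := HP i; have := HR i; have := ha i. nia.
have Hm2 : forall i, 2 <= m i -> m i <= n i.
  move=> i; have := Em i; have := HP i; have := HR i; have := ha i. nia.
have Hn : \sum_i n i <= size rest.
  rewrite /n /Ssum exchange_big /= -sum1_size big_seq [X in _ <= X]big_seq.
  by apply: leq_sum => r Hr; exact: Hsz.
have Hsm : \sum_i m i = N + size rest - 1 by rewrite Hsum /=; lia.
have [j Hj] : exists j, 2 <= m j.
  apply/existsP; apply: contraT; rewrite negb_exists => /forallP Hall.
  have : \sum_i m i <= \sum_(i < N) 1.
    by apply: leq_sum => i _; have := Hall i; have := Hm1 i; lia.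
  rewrite sum1_card card_ord Hsm; lia.
set dd := fun i => n i + 1 - m i.
have Hd : \sum_i m i + \sum_i dd i = \sum_i n i + N.
  rewrite -big_split /= (eq_bigr (fun i => n i + 1)).
    by rewrite big_split /= sum1_card card_ord.
  by move=> i _; rewrite /dd; have := Hm1 i; lia.
have Hdsp : \sum_i dd i = dd j + \sum_(i | i != j) dd i by rewrite (bigD1 j).
rewrite Hdsp in Hd.
have Hdj : 1 <= dd j by rewrite /dd; have := Hm2 j Hj; lia.
have Hrest0 : \sum_(i | i != j) dd i = 0.
  move: Hd; rewrite Hsm; set S := \sum_(i | _) dd i; lia.
have Hdi : forall i, i != j -> dd i = 0.
  move=> i Hi; move/eqP: Hrest0; rewrite sum_nat_eq0 => /forallP /(_ i).
  by rewrite Hi /= => /eqP.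
have Hmi : forall i, i != j -> m i = 1 /\ n i = 0.
  move=> i Hi; have := Hdi i Hi; rewrite /dd => H.
  have := Hm1 i; case: (leqP 2 (m i)) => [/Hm2|]; lia.
have Hdj1 : dd j = 1.
  move: Hd; rewrite Hsm; set S := \sum_(i | _) dd i; lia.
have Hmj : m j = 2 /\ n j = 2.
  have := Em j; have := HP j; have := HR j; have := ha j; have := Hm2 j Hj.
  move: Hdj1; rewrite /dd; nia.
have Hnsum : \sum_i n i = 2.
  rewrite (bigD1 j) //= big1; first by case: Hmj => _ ->.
  by move=> i Hi; case: (Hmi i Hi).
have Hsr : size rest = 2.
  move: Hd; rewrite Hsm Hnsum Hdj1 Hrest0; lia.
have [u1 [u2 Er]] : exists u1 u2, rest = [:: u1; u2].
  by move: Hsr; case: (rest) => [|u1 [|u2 [|]]] //= _; exists u1, u2.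
have Hn' : forall i, n i = u1 i + u2 i by move=> i; rewrite /n Er /Ssum !big_cons big_nil addn0.
have Hs1 : sz u1 <= 1 by apply: Hsz; rewrite Er inE eqxx.
have Hs2 : sz u2 <= 1 by apply: Hsz; rewrite Er !inE eqxx orbT.
have Hu1j := sz_ge u1 j; have Hu2j := sz_ge u2 j.
have Hj1 : nat_of_ord (u1 j) = 1 /\ nat_of_ord (u2 j) = 1.
  by case: Hmj => _; rewrite Hn'; lia.
exists j, u1, u2; split => //; split.
- apply/forallP => i /=; case: (eqVneq i j) => [->|Hi]; first by case: Hj1 => ->.
  by case: (Hmi i Hi) => _; rewrite Hn'; lia.
- apply/forallP => i /=; case: (eqVneq i j) => [->|Hi]; first by case: Hj1 => _ ->.
  by case: (Hmi i Hi) => _; rewrite Hn'; lia.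
- have := Em j; case: Hmj => -> ->; have := HP j; have := HR j; lia.
- have := Em j; case: Hmj => -> ->; have := HP j; have := HR j; lia.
- move=> i Hi; have := Em i; case: (Hmi i Hi) => -> ->; lia.
Qed.

End Term.

Local Open Scope ring_scope.

Section Main.
Variable (K : numFieldType) (N : nat) (a : 'I_N -> nat).
Hypothesis ha : forall i, (2 < a i)%N.
Variable (c : K) (corr1 corr2 : seq (Mon a) -> K).
Hypothesis c0 : c != 0.
Hypothesis T1 : genus0_theory c corr1.
Hypothesis T2 : genus0_theory c corr2.
Hypothesis Hbase : forall j (r1 r2 r3 r4 : Mon a),
      is_xj j r1 -> is_xj j r2 -> is_xj_top j r3 -> is_top r4 ->
      corr1 [:: r1; r2; r3; r4] = corr2 [:: r1; r2; r3; r4].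

Definition Q (s : seq (Mon a)) : nat := (\sum_(r <- s) sz r ^ 2)%N.

Lemma eqc_perm s t : all_valid s -> perm_eq s t -> corr1 s = corr2 s -> corr1 t = corr2 t.
Proof.
case: T1 => S1 _ _ _ _; case: T2 => S2 _ _ _ _.
by move=> Vs Hp E; rewrite -(S1 s t Vs Hp) -(S2 s t Vs Hp).
Qed.

Lemma selP s : all_valid s -> (3 <= size s)%N ->
  corr1 s = corr2 s \/
  ((forall i, (Ssum i s + 2) %% a i = 0)%N /\ (\sum_i (Ssum i s + 2) %/ a i = N + size s - 3)%N).
Proof.
move=> Vs Hs; case: T1 => _ _ D1 I1 _; case: T2 => _ _ D2 I2 _.
case: (eqVneq (corr1 s) 0) => H1.
  case: (eqVneq (corr2 s) 0) => H2; first by left; rewrite H1 H2.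
  right; split. exact: (sel_div I2 Vs Hs H2). exact: (sel_sum ha D2 I2 Vs Hs H2).
right; split. exact: (sel_div I1 Vs Hs H1). exact: (sel_sum ha D1 I1 Vs Hs H1).
Qed.

Definition ge : rel (Mon a) := fun x y => (sz y <= sz x)%N.

Lemma core k (Hk : (4 <= k)%N)
  (IHk : forall s, all_valid s -> (3 <= size s)%N -> (size s < k)%N -> corr1 s = corr2 s)
  s (Vs : all_valid s) (Hs : size s = k)
  (IHQ : forall t, all_valid t -> size t = k -> (Q s < Q t)%N -> corr1 t = corr2 t) :
  corr1 s = corr2 s.
Proof.
have Hp : perm_eq (sort ge s) s by rewrite perm_sort.
have Vs' : all_valid (sort ge s) by rewrite /all_valid (perm_all _ Hp).
have Hs' : size (sort ge s) = k by rewrite (perm_size Hp).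
have HQ' : Q (sort ge s) = Q s by rewrite /Q (perm_big _ Hp).
have Hsort : sorted ge (sort ge s).
  by apply: sort_sorted => x y; rewrite /ge leq_total.
apply: (eqc_perm Vs' Hp).
move: Vs' Hs' HQ' Hsort; case: (sort ge s) => [|P [|R [|T rest]]] /=; try by move=> _ Hkk; rewrite -Hkk in Hk.
move=> /and4P [VP VR VT Vrest] Hsl HQl /and3P [HPR HRT Hpath].
have Vr : all (@valid N a) rest := Vrest.
have Hrest : all (ge T) rest by apply: order_path_min Hpath => x y z; rewrite /ge => H1 H2; exact: leq_trans H2 H1.
have IHrel : forall xs : seq (Mon a), size xs = size rest -> forall t, all_valid t -> (3 <= size t)%N -> (size t < size xs + 3)%N -> corr1 t = corr2 t.
  by move=> xs Hxs t Vt H3t Hlt; apply: IHk => //; rewrite -Hsl -addn3 -Hxs.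
have Z : forall (b : bool) l, (b -> [/\ all_valid l, size l = k & (Q s < Q l)%N]) ->
    (if b then corr1 l - corr2 l else 0) = 0.
  move=> [] l // /(_ isT) [Vl Sl Ql]; by rewrite (IHQ l Vl Sl Ql) subrr.
case: (leqP 2 (sz T)) => HT.
-
  have [l Hl] : exists l, (0 < T l)%N.
    apply/existsP; apply: contraLR HT; rewrite negb_exists => /forallP H.
    have -> : sz T = 0%N by rewrite /sz big1 // => i _; have := H i; rewrite lt0n negbK => /eqP.
    by [].
  have [Hvs He] := gen_subm ha VT Hl.
  set e := gen T l in Hvs He *; set f := subm T l in Hvs He *.
  have Ve : valid e := gen_valid ha T l.
  have Vf : valid f := subm_valid ha l VT.
  have Sf : sz f = (sz T - 1)%N := sz_subm ha VT Hl.
  have Se : sz e = 1%N := sz_gen ha T l.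
  have Hn : (0 < size rest)%N by rewrite lt0n; apply/eqP => E; rewrite -Hsl E in Hk.
  have Qrest : forall l1 l2 : seq (Mon a), Q (l1 ++ l2) = (Q l1 + Q l2)%N by move=> l1 l2; rewrite /Q big_cat.
  have H := relW ha c0 T1 T2 (IHrel rest erefl) Hn Vrest VP VR Ve Vf.
  rewrite Hvs He (Z (vs P R)) ?(Z (vs R f)) ?(Z (vs P e)) in H.
  - have {}H : corr1 (rest ++ [:: P; R; T]) = corr2 (rest ++ [:: P; R; T]).
      by move: H; rewrite !addr0 => /eqP; rewrite subr_eq0 => /eqP.
    apply: (eqc_perm _ _ H).
      by rewrite /all_valid all_cat Vr /=; repeat (apply/andP; split).
    by rewrite perm_catC.
  - move=> Hb; split.
    + by rewrite /all_valid /= (addm_valid ha Hb) /= all_cat Vr /=; repeat (apply/andP; split).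
    + by rewrite /= size_cat /= -Hsl addn2.
    + rewrite -HQl /= /Q !big_cons big_cat /= !big_cons big_nil (sz_addm ha Hb) Se Sf.
      move: HPR HRT HT; rewrite /ge; clear -Se; nia.
  - move=> Hb; split.
    + by rewrite /all_valid all_cat Vr /= (addm_valid ha Hb); repeat (apply/andP; split).
    + by rewrite size_cat /= -Hsl addn3.
    + rewrite -HQl /= /Q !big_cons big_cat /= !big_cons big_nil (sz_addm ha Hb) Se Sf.
      move: HPR HRT HT; rewrite /ge; clear -Se; nia.
  - move=> Hb; split.
    + by rewrite /all_valid /= (addm_valid ha Hb) /= all_cat Vr /=; repeat (apply/andP; split).
    + by rewrite /= size_cat /= -Hsl addn2.
    + rewrite -HQl /= /Q !big_cons big_cat /= !big_cons big_nil (sz_addm ha Hb) Se Sf.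
      move: HPR HRT HT; rewrite /ge; clear -Se; nia.
-
  have Vl : all_valid [:: P, R, T & rest].
    by rewrite /all_valid /= Vr; repeat (apply/andP; split).
  have H3l : (3 <= size [:: P, R, T & rest])%N by [].
  case: (selP Vl H3l) => // [[Hmod Hsum]].
  have Vrest' : all_valid (T :: rest) by rewrite /all_valid /= Vr andbT.
  have Hsz : forall r, r \in T :: rest -> (sz r <= 1)%N.
    move=> r; rewrite inE => /orP [/eqP ->|Hr]; first by [].
    by have := allP Hrest r Hr; rewrite /ge => H1; exact: leq_trans H1 HT.
  have H2r : (2 <= size (T :: rest))%N.
    by rewrite /= ltnS lt0n; apply/eqP => E; rewrite -Hsl E in Hk.
  have [j [u1 [u2 [Er [X1 X2 Pj Rj Hij]]]]] := terminal ha VP VR Vrest' Hsz H2r Hmod Hsum.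
  case: Er => ET Erest; subst T rest.
  have u1j : nat_of_ord (u1 j) = 1%N by have := eqP (forallP X1 j); rewrite eqxx.
  have u2j : nat_of_ord (u2 j) = 1%N by have := eqP (forallP X2 j); rewrite eqxx.
  have HPj := validP VP; have HRj := validP VR.
  case: (boolP [exists i, (i != j) && (0 < R i)%N]) => [/existsP [i /andP [Hij' HRi]]|Hno].
  + have [Hvs He] := gen_subm ha VR HRi.
    set e := gen R i in Hvs He *; set f := subm R i in Hvs He *.
    have Ve : valid e := gen_valid ha R i.
    have Vf : valid f := subm_valid ha i VR.
    have Sf : sz f = (sz R - 1)%N := sz_subm ha VR HRi.
    have Se : sz e = 1%N := sz_gen ha R i.
    have HRpos : (0 < sz R)%N by apply: leq_trans HRi (sz_ge R i).
    have [Vu1 Vu2] : valid u1 /\ valid u2.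
      by move: Vl; rewrite /all_valid /= => /and4P [_ _ ? /andP [? _]].
    have Vu1' : all_valid [:: u1] by rewrite /all_valid /= andbT.
    have H := relW ha c0 T1 T2 (IHrel [:: u1] erefl) (isT : (0 < size [:: u1])%N)
       (xs := [:: u1]) (g := P) (d := u2) (e := e) (f := f) (Vu1' : all_valid [:: u1]) VP Vu2 Ve Vf.
    have Hvs1 : vs P u2 = false.
      apply/negbTE/negP => /forallP /(_ j); rewrite u2j; have := HPj j; rewrite Pj.
      by move=> _; rewrite addn1 ltnn.
    have Hvs2 : vs u2 f = false.
      apply/negbTE/negP => /forallP /(_ j); rewrite u2j (submE ha i j VR) Rj.
      have -> : (j == i) = false by apply/negbTE; rewrite eq_sym.
      move: (ha j); move: (a j) => x H1 H2; clear -H1 H2; lia.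
    rewrite Hvs He Hvs1 Hvs2 (Z (vs P e)) in H.
    * have {}H : corr1 [:: u1; P; u2; R] = corr2 [:: u1; P; u2; R].
        by move: H; rewrite !addr0 => /eqP; rewrite subr_eq0 => /eqP.
      apply: (eqc_perm _ _ H); first by rewrite /all_valid /=; repeat (apply/andP; split).
      by apply/permP => p /=; ring.
    * move=> Hb; split.
      - by rewrite /all_valid /= (addm_valid ha Hb); repeat (apply/andP; split).
      - by rewrite -Hsl.
      - rewrite -HQl /= /Q !big_cons big_nil (sz_addm ha Hb) Se Sf.
        move: HPR HRpos; rewrite /ge; clear -Se; nia.
  + have R0 : forall i, i != j -> nat_of_ord (R i) = 0%N.
      move=> i Hi; move: Hno; rewrite negb_exists => /forallP /(_ i); rewrite Hi /=.
      by rewrite lt0n negbK => /eqP.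
    have XR : is_xj_top j R.
      apply/forallP => i /=; case: (eqVneq i j) => [->|Hi]; first by rewrite Rj.
      by rewrite R0.
    have XP : is_top P.
      apply/forallP => i /=; case: (eqVneq i j) => [->|Hi]; first by rewrite Pj.
      by have := Hij i Hi; rewrite R0 // addn0 => ->.
    have H := Hbase X1 X2 XR XP.
    apply: (eqc_perm _ _ H); first by move: Vl; rewrite /all_valid /= => /and4P [h1 h2 h3 /andP [h4 _]]; repeat (apply/andP; split).
    by apply/permP => p /=; ring.
Qed.

Definition Mb : nat := (\sum_i (a i - 2))%N.

Lemma sz_le (r : Mon a) : valid r -> (sz r <= Mb)%N.
Proof. by move=> Vr; apply: leq_sum => i _; exact: validP Vr i. Qed.

Lemma Qbound s : all_valid s -> (Q s <= size s * Mb ^ 2)%N.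
Proof.
elim: s => [|r s IH]; first by rewrite /Q big_nil.
rewrite {1}/all_valid /= => /andP [Vr Vs].
rewrite /Q big_cons -/(Q s); have := IH Vs; have := sz_le Vr.
move: (Q s) (sz r) Mb (size s) => q x y n; clear; nia.
Qed.

Lemma stepk k (Hk : (4 <= k)%N)
  (IHk : forall s, all_valid s -> (3 <= size s)%N -> (size s < k)%N -> corr1 s = corr2 s) :
  forall s, all_valid s -> size s = k -> corr1 s = corr2 s.
Proof.
suff H : forall n s, all_valid s -> size s = k -> (k * Mb ^ 2 - Q s <= n)%N -> corr1 s = corr2 s.
  by move=> s Vs Hs; exact: (H _ s Vs Hs (leqnn _)).
elim=> [|n IHn] s Vs Hs Hn; apply: (core Hk IHk Vs Hs) => t Vt Ht HQ.
  exfalso; move: (Qbound Vt) Hn HQ; rewrite Ht; move: (k * Mb ^ 2)%N (Q s) (Q t) => M x y; clear; lia.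
apply: (IHn t Vt Ht); move: (Qbound Vt) Hn HQ; rewrite Ht; move: (k * Mb ^ 2)%N (Q s) (Q t) => M x y; clear; lia.
Qed.

Lemma main_eq s : all_valid s -> (3 <= size s)%N -> corr1 s = corr2 s.
Proof.
move: {2}(size s) (leqnn (size s)) => n; elim: n s => [|n IHn] s Hsn Vs H3.
  by move: (leq_trans H3 Hsn).
case: (ltngtP (size s) 3) => [|Hgt|Heq].
- by rewrite ltnNge H3.
- apply: (stepk Hgt) => // t Vt H3t Hlt; apply: IHn => //.
  by rewrite -ltnS; exact: leq_trans Hlt Hsn.
- case: T1 => _ A1 _ _ _; case: T2 => _ A2 _ _ _.
  move: Vs Heq; case: s Hsn H3 => [|r1 [|r2 [|r3 [|]]]] //= _ _ /and4P [V1 V2 V3 _] _.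
  by rewrite A1 // A2.
Qed.

End Main.

Local Open Scope ring_scope.
Unset Implicit Arguments.
Set Strict Implicit.

Theorem proposition4p7 (K : numFieldType) (N : nat) (a : 'I_N -> nat)
  (c : K) (corr1 corr2 : seq (Mon a) -> K) :
  (forall i, (2 < a i)%N) -> c != 0 ->
  genus0_theory c corr1 -> genus0_theory c corr2 ->
  (forall j (r1 r2 r3 r4 : Mon a),
      is_xj j r1 -> is_xj j r2 -> is_xj_top j r3 -> is_top r4 ->
      corr1 [:: r1; r2; r3; r4] = corr2 [:: r1; r2; r3; r4]) ->
  forall s : seq (Mon a), all (@valid N a) s -> (3 <= size s)%N ->
    corr1 s = corr2 s.
Proof.
move=> ha c0 T1 T2 Hb s Vs Hs.
exact: (main_eq ha c0 T1 T2 Hb Vs Hs).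
Qed.
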